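(* Every singleton congestion game structure $\mathcal G=(\mathcal R,c,\mathcal S)$ has a monotone equilibrium selection: for each demand vector $\mu\in\mathbb R_+^{\mathcal H}$ one can choose an equilibrium load vector $x(\mu)$ of $(\mathcal G,\mu)$ such that for every resource $r\in\mathcal R$ the map $\mu\mapsto x_r(\mu)$ is nondecreasing with respect to each component $\mu^h$, $h\in\mathcal H$.
   Context: A congestion game structure $\mathcal G=(\mathcal R,c,\mathcal S)$ consists of: a finite set $\mathcal R$ of resources, each $r\in\mathcal R$ with a continuous nondecreasing cost function $c_r:\mathbb R_+\to\mathbb R_+$; and a finite set $\mathcal H$ of commodities, each $h\in\mathcal H$ with a nonempty finite family $\mathcal S^h\subseteq 2^{\mathcal R}$ of feasible strategies. A demand vector $\mu=(\mu^h)_{h\in\mathcal H}\in\mathbb R_+^{\mathcal H}$ defines the game $(\mathcal G,\mu)$. A feasible flow is $f=(f^h_s)$ with $f^h_s\ge0$, $\sum_{s\in\mathcal S^h}f^h_s=\mu^h$; it induces loads $x_r=\sum_h\sum_{s\in\mathcal S^h:r\in s}f^h_s$ and strategy costs $c_s=\sum_{r\in s}c_r(x_r)$. A Wardrop equilibrium is a feasible flow such that for each $h$ there is $\lambda^h$ with $c_s=\lambda^h$ for all $s\in\mathcal S^h$ with $f^h_s>0$ and $c_s\ge\lambda^h$ for all $s\in\mathcal S^h$ with $f^h_s=0$; an equilibrium load vector is the load vector of a Wardrop equilibrium. The structure is a singleton congestion game if every feasible strategy is a single resource, so $\mathcal S^h$ can be identified with a nonempty subset $\mathcal R^h\subseteq\mathcal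 R$. A monotone equilibrium selection (MES) is a choice, for each $\mu\in\mathbb R_+^{\mathcal H}$, of an equilibrium load vector $x(\mu)$ such that each $\mu\mapsto x_r(\mu)$ is nondecreasing in each coordinate $\mu^h$. *)

(* Defs.v *)
From HB Require Import structures.
From mathcomp Require Import all_boot all_order all_algebra.
From mathcomp Require Import all_classical all_reals topology normedtype.
Set Implicit Arguments. Unset Strict Implicit. Unset Printing Implicit Defensive.
Import Order.TTheory GRing.Theory Num.Theory numFieldNormedType.Exports.
Local Open Scope ring_scope.
Local Open Scope classical_set_scope.

Section Congestion.
Variables (R : realType) (Res H : finType).

Definition valid_costs (c : Res -> R -> R) : Prop :=
  forall r, [/\ {within [set x : R | 0 <= x], continuous (c r)},
               (forall a b, 0 <= a -> a <= b -> c r a <= c r b)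
             & (forall a, 0 <= a -> 0 <= c r a)].

Definition valid_strategies (S : H -> {set {set Res}}) : Prop :=
  forall h, S h != finset.set0.

Definition singleton_game (S : H -> {set {set Res}}) : Prop :=
  forall h s, s \in S h -> #|s| = 1%N.

Definition nonneg_demand (mu : H -> R) : Prop := forall h, 0 <= mu h.

(* a flow assigns f h s to strategy s of commodity h (only s \in S h matter) *)
Definition feasible_flow (S : H -> {set {set Res}}) (mu : H -> R)
    (f : H -> {set Res} -> R) : Prop :=
  forall h, (forall s, s \in S h -> 0 <= f h s) /\
            \sum_(s in S h) f h s = mu h.

Definition load (S : H -> {set {set Res}}) (f : H -> {set Res} -> R) (r : Res) : R :=
  \sum_(h : H) \sum_(s in S h | r \in s) f h s.

Definition strat_cost (c : Res -> R -> R) (S : H -> {set {set Res}})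
    (f : H -> {set Res} -> R) (s : {set Res}) : R :=
  \sum_(r in s) c r (load S f r).

Definition wardrop_eq (c : Res -> R -> R) (S : H -> {set {set Res}}) (mu : H -> R)
    (f : H -> {set Res} -> R) : Prop :=
  feasible_flow S mu f /\
  forall h, exists lam : R, forall s, s \in S h ->
     (0 < f h s -> strat_cost c S f s = lam) /\
     (f h s = 0 -> lam <= strat_cost c S f s).

Definition eq_load (c : Res -> R -> R) (S : H -> {set {set Res}}) (mu : H -> R)
    (x : Res -> R) : Prop :=
  exists f, wardrop_eq c S mu f /\ forall r, x r = load S f r.

Definition monotone_eq_selection (c : Res -> R -> R) (S : H -> {set {set Res}})
    (x : (H -> R) -> Res -> R) : Prop :=
  (forall mu, nonneg_demand mu -> eq_load c S mu (x mu)) /\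
  (forall (r : Res) (h : H) (mu mu' : H -> R),
     nonneg_demand mu -> nonneg_demand mu' ->
     (forall h', h' != h -> mu h' = mu' h') -> mu h <= mu' h ->
     x mu r <= x mu' r).

End Congestion.

(* Main.v *)
Require Import Defs.
From HB Require Import structures.
From mathcomp Require Import all_boot all_order all_algebra.
From mathcomp Require Import all_classical all_reals all_analysis.
From mathcomp Require Import ring lra.
Set Implicit Arguments. Unset Strict Implicit. Unset Printing Implicit Defensive.
Import Order.TTheory GRing.Theory Num.Theory numFieldNormedType.Exports.
Local Open Scope ring_scope.
Local Open Scope classical_set_scope.
Section Prim.
Variable R : realType.
Notation mu := (@lebesgue_measure R).

Lemma prim_bound (c : R -> R) :
  {within [set x : R | 0 <= x], continuous c} ->
  (forall a b, 0 <= a -> a <= b -> c a <= c b) ->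
  forall a b, 0 <= a -> a <= b ->
  (b - a) * c a <= \int[mu]_(t in `[0, b]) c t - \int[mu]_(t in `[0, a]) c t
     <= (b - a) * c b.
Proof.
move=> hc hm a b a0 ab.
have ib : mu.-integrable `[0, b] (EFin \o c).
  apply: continuous_compact_integrable; first exact: segment_compact.
  apply: continuous_subspaceW hc => x /=; rewrite in_itv /= => /andP[].
  done.
rewrite (@Rintegral_itvB _ _ _ _ a ib) ?bnd_simp //.
have iab : mu.-integrable `]a, b] (EFin \o c).
  apply: integrableS ib => //= x /=; rewrite !in_itv /= => /andP[ax ->].
  by rewrite andbT (le_trans a0) // ltW.
have icst : forall k : R, mu.-integrable `]a, b] (EFin \o cst k).
  move=> k.
  have ik : mu.-integrable `[a, b] (EFin \o cst k).
    apply: continuous_compact_integrable; first exact: segment_compact.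
    by apply: continuous_subspaceT; exact: cst_continuous.
  apply: integrableS ik => //.
  by move=> x /=; rewrite !in_itv /= => /andP[/ltW -> ->].
have mab : fine (mu `]a, b]) = b - a.
  rewrite lebesgue_measure_itv /= lte_fin.
  have [ab'|ba] := ltP a b; first by [].
  have -> : a = b by apply/eqP; rewrite eq_le ab ba.
  by rewrite subrr.
have e k : \int[mu]_(x in `]a, b]) (cst k) x = (b - a) * k.
  by rewrite Rintegral_cst // mab mulrC.
apply/andP; split.
- rewrite -e; apply: le_Rintegral => // x /=; rewrite in_itv /= => /andP[ax xb].
  by apply: hm => //; apply: ltW.
- rewrite -e; apply: le_Rintegral => // x /=; rewrite in_itv /= => /andP[ax xb].
  by apply: hm => //; rewrite (le_trans a0) // ltW.
Qed.

Lemma prim_exists (c : R -> R) :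
  {within [set x : R | 0 <= x], continuous c} ->
  (forall a b, 0 <= a -> a <= b -> c a <= c b) ->
  (forall a, 0 <= a -> 0 <= c a) ->
  exists P : R -> R,
    (forall a b, 0 <= a -> a <= b -> (b - a) * c a <= P b - P a <= (b - a) * c b)
    /\ continuous P.
Proof.
move=> hc hm hp.
pose I x := \int[mu]_(t in `[0, x]) c t.
have I0 : I 0 = 0 by rewrite /I set_itv1 Rintegral_set1.
pose P x := if 0 <= x then I x else x * c 0.
have PB : forall a b, 0 <= a -> a <= b -> (b - a) * c a <= P b - P a <= (b - a) * c b.
  move=> a b a0 ab; rewrite /P a0 (le_trans a0 ab).
  exact: prim_bound.
have G : forall a b, a <= b -> 0 <= P b - P a <= (b - a) * c (Num.max b 0).
  move=> a b ab.
  have [a0|a0] := leP 0 a.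
    have b0 : 0 <= b by apply: le_trans ab.
    have /andP[h1 h2] := PB a b a0 ab.
    rewrite (max_idPl b0) h2 andbT (le_trans _ h1) //.
    by apply: mulr_ge0; [rewrite subr_ge0|apply: hp].
  have na : (0 <= a) = false by rewrite leNgt a0.
  have [b0|b0] := leP 0 b.
    have /andP[h1 h2] := PB 0 b (lexx 0) b0.
    rewrite /P b0 na /=.
    move: h1 h2; rewrite /P b0 lexx I0 !subr0 => h1 h2.
    have c0b : c 0 <= c b by apply: hm.
    have hc0 := hp 0 (lexx 0).
    apply/andP; split; first by nra.
    by nra.
  have nb : (0 <= b) = false by rewrite leNgt b0.
  rewrite /P na nb /=.
  rewrite -mulrBl; have hc0 := hp 0 (lexx 0).
  by rewrite lexx andbT mulr_ge0 // subr_ge0.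
exists P; split => //.
move=> x; apply/cvgrPdist_lt => e e0.
pose K := c (Num.max (x + 1) 0) + 1.
have K0 : 0 < K by rewrite /K ltr_pwDr // hp // le_max lexx orbT.
pose d := Num.min 1 (e / K).
have d0 : 0 < d by rewrite lt_min ltr01 divr_gt0.
near=> y.
have hxy : `|x - y| < d.
  by near: y; apply/nbhs_ballP; exists d => //= z; rewrite /ball /=.
have d1' : d <= 1 by rewrite /d ge_min lexx.
have d2' : d <= e / K by rewrite /d ge_min lexx orbT.
have d1 : `|x - y| < 1 by apply: lt_le_trans hxy d1'.
have deK : d * K <= e by rewrite -(@ler_pdivlMr _ K).
have cK : forall z, z <= x + 1 -> c (Num.max z 0) <= K - 1.
  move=> z zx; rewrite /K addrK; apply: hm; first by rewrite le_max lexx orbT.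
  by rewrite ge_max !le_max zx lexx !orbT.
have hxyK : `|x - y| * K < e by apply: lt_le_trans deK; rewrite ltr_pM2r.
have [yx|xy] := leP y x.
  have /andP[g1 g2] := G y x yx.
  rewrite ger0_norm //; apply: le_lt_trans hxyK; apply: (le_trans g2).
  rewrite ger0_norm ?subr_ge0 //; apply: ler_wpM2l; first by rewrite subr_ge0.
  by apply: (le_trans (cK x _)); rewrite ?lerDl // gerBl.
have /andP[g1 g2] := G x y (ltW xy).
rewrite distrC ger0_norm //; apply: le_lt_trans hxyK; apply: (le_trans g2).
rewrite (distrC x y) (ger0_norm (ltW _)) ?subr_gt0 //.
apply: ler_wpM2l; first by rewrite subr_ge0 ltW.
apply: (le_trans (cK y _)); last by rewrite gerBl.
move: d1; rewrite distrC ltr_norml; lra.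
Unshelve. all: by end_near.
Qed.
End Prim.
Section Mon.
Variables (R : realType) (Res H : finType).
Implicit Types (S : H -> {set {set Res}}) (f g : H -> {set Res} -> R).

Lemma single_of S h s : singleton_game S -> s \in S h -> exists r, s = [set r]%SET.
Proof. by move=> sg sS; apply/cards1P; rewrite (sg h s sS). Qed.

Lemma cost_single (c : Res -> R -> R) S f r :
  strat_cost c S f [set r]%SET = c r (load S f r).
Proof. by rewrite /strat_cost big_set1. Qed.

Lemma load_ge0 S mu f : feasible_flow S mu f -> forall r, 0 <= load S f r.
Proof.
move=> ff r; apply: sumr_ge0 => h _; apply: sumr_ge0 => s /andP[sS _].
by case: (ff h) => + _; apply.
Qed.

Lemma sum_single (D : {set Res}) r1 (k : R) :
  \sum_(r in D | r \in [set r1]%SET) k = if r1 \in D then k else 0.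
Proof.
rewrite big_mkcond (bigD1 r1) //= !inE eqxx andbT big1 ?addr0 //.
by move=> r /negbTE rr1; rewrite !inE rr1 andbF.
Qed.

Lemma sum_D_load S f (D : {set Res}) :
  \sum_(r in D) load S f r =
  \sum_h \sum_(s in S h) \sum_(r in D | r \in s) f h s.
Proof.
rewrite /load exchange_big /=; apply: eq_bigr => h _.
rewrite (eq_bigr (fun r => \sum_(s in S h) if r \in s then f h s else 0)); last first.
  by move=> r _; rewrite big_mkcondr.
rewrite exchange_big /=; apply: eq_bigr => s _.
by rewrite big_mkcondr.
Qed.

Lemma lam_le (c : Res -> R -> R) S mu f h lam s :
  feasible_flow S mu f -> s \in S h ->
  (0 < f h s -> strat_cost c S f s = lam) /\ (f h s = 0 -> lam <= strat_cost c S f s) ->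
  lam <= strat_cost c S f s.
Proof.
move=> ff sS [h1 h2]; have f0 : 0 <= f h s by case: (ff h) => + _; apply.
move: f0; rewrite le_eqVlt => /orP[/eqP/esym|] ?; first exact: h2.
by rewrite h1.
Qed.

Lemma mon_loads (c : Res -> R -> R) S mu mu' f g :
  singleton_game S ->
  (forall r a b, 0 <= a -> a < b -> c r a < c r b) ->
  wardrop_eq c S mu f -> wardrop_eq c S mu' g -> (forall h, mu h <= mu' h) ->
  forall r, load S f r <= load S g r.
Proof.
move=> sg cs [ff wf] [fg wg] mumu'.
have cm : forall r a b, 0 <= a -> a <= b -> c r a <= c r b.
  move=> r a b a0; rewrite le_eqVlt => /orP[/eqP->//|ab].
  exact/ltW/cs.
have lf0 := load_ge0 ff; have lg0 := load_ge0 fg.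
move=> r0; rewrite leNgt; apply/negP => r0D.
pose D := [set r | load S g r < load S f r]%SET.
have key : forall h,
  \sum_(s in S h) \sum_(r in D | r \in s) f h s <=
  \sum_(s in S h) \sum_(r in D | r \in s) g h s.
  move=> h.
  have [lf Hf] := wf h; have [lg Hg] := wg h.
  have fS : forall s, s \in S h -> 0 <= f h s by case: (ff h).
  have gS : forall s, s \in S h -> 0 <= g h s by case: (fg h).
  have [[s [sS [fpos [r1 [sr1 r1D]]]]]|none] :=
    pselect (exists s, s \in S h /\ 0 < f h s /\ exists r1, s = [set r1]%SET /\ r1 \in D).
    have lfE : lf = c r1 (load S f r1).
      by rewrite -(cost_single c S f r1) -sr1; case: (Hf s sS) => + _; move/(_ fpos).
    have lgle : lg <= c r1 (load S g r1).
      by rewrite -(cost_single c S g r1) -sr1; apply: lam_le fg sS (Hg s sS).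
    have lglf : lg < lf.
      rewrite lfE; apply: (le_lt_trans lgle); apply: cs => //.
      by move: r1D; rewrite inE.
    have -> : \sum_(s0 in S h) \sum_(r in D | r \in s0) g h s0 = mu' h.
      case: (fg h) => _ <-; apply: eq_bigr => s' s'S.
      have [r2 ?] := single_of sg s'S; subst s'; rewrite sum_single.
      case: ifP => // r2D.
      have := gS _ s'S; rewrite le_eqVlt => /orP[/eqP // | gpos].
      exfalso; move/negbT: r2D; rewrite inE -leNgt => /negP; apply.
      have := (Hg _ s'S).1 gpos; rewrite cost_single => e1.
      have := lam_le ff s'S (Hf _ s'S); rewrite cost_single => e2.
      move=> le12.
      have := cm r2 _ _ (lf0 r2) le12; rewrite e1 => e3.
      by have := lt_le_trans lglf (le_trans e2 e3); rewrite ltxx.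
    apply: (le_trans _ (mumu' h)); case: (ff h) => _ <-.
    apply: ler_sum => s' s'S; have [r2 ?] := single_of sg s'S; subst s'.
    by rewrite sum_single; case: ifP => // _; rewrite fS.
  apply: (@le_trans _ _ 0).
    rewrite le_eqVlt; apply/orP; left; apply/eqP.
    apply: big1 => s' s'S; have [r2 ?] := single_of sg s'S; subst s'.
    rewrite sum_single; case: ifP => // r2D.
    have := fS _ s'S; rewrite le_eqVlt => /orP[/eqP/esym // | fpos].
    by exfalso; apply: none; exists [set r2]%SET; split => //; split => //; exists r2.
  apply: sumr_ge0 => s' s'S; apply: sumr_ge0 => r _; exact: gS.
have : \sum_(r in D) load S f r <= \sum_(r in D) load S g r.
  by rewrite !sum_D_load; apply: ler_sum => h _; exact: key.
apply/negP; rewrite -ltNge; apply: ltr_sum.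
  by apply/hasP; exists r0; rewrite ?mem_index_enum // inE.
by move=> r; rewrite inE.
Qed.

Definition ind (p : H * {set Res}) (h2 : H) (t : {set Res}) : R := ((h2, t) == p)%:R.

Lemma sum_ind S h0 t0 h2 : t0 \in S h0 ->
  \sum_(t in S h2) ind (h0, t0) h2 t = (h2 == h0)%:R.
Proof.
move=> t0S; have [->|hne] := eqVneq h2 h0.
  rewrite (bigD1 t0) //= /ind eqxx big1 ?addr0 // => t /andP[_ tne].
  by rewrite xpair_eqE eqxx (negbTE tne).
by rewrite big1 // => t _; rewrite /ind xpair_eqE (negbTE hne).
Qed.

Lemma load_ind S h0 t0 x : t0 \in S h0 ->
  load S (ind (h0, t0)) x = (x \in t0)%:R.
Proof.
move=> t0S; rewrite /load (bigD1 h0) //= [X in _ + X]big1 ?addr0; last first.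
  move=> h2 hne; apply: big1 => t _; by rewrite /ind xpair_eqE (negbTE hne).
have [xt|xt] := boolP (x \in t0).
  rewrite (bigD1 t0) /=; last by rewrite t0S xt.
  rewrite /ind eqxx big1 ?addr0 // => t /andP[_ tne].
  by rewrite xpair_eqE eqxx (negbTE tne).
rewrite big1 // => t /andP[tS xt']; rewrite /ind xpair_eqE eqxx /=.
by case: eqP => // tt0; move: xt; rewrite -tt0 xt'.
Qed.

Lemma load_lin S f (G1 G2 : H -> {set Res} -> R) (k : R) x :
  load S (fun h2 t => f h2 t + k * (G1 h2 t - G2 h2 t)) x =
  load S f x + k * (load S G1 x - load S G2 x).
Proof.
rewrite /load -sumrB mulr_sumr -big_split; apply: eq_bigr => h2 _ /=.
by rewrite -sumrB mulr_sumr -big_split; apply: eq_bigr => t _.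
Qed.

Definition Kf S (mu : H -> R) (f : H -> {set Res} -> R) : Prop :=
  (forall h s, 0 <= f h s <= \sum_h2 mu h2) /\ (forall h, \sum_(s in S h) f h s = mu h).

Definition Phi S (P : Res -> R -> R) (f : H -> {set Res} -> R) : R :=
  \sum_r P r (load S f r).

Lemma fo (c P : Res -> R -> R) S mu f :
  singleton_game S -> valid_strategies S ->
  (forall r x, 0 <= x -> forall e, 0 < e ->
     exists2 d, 0 < d & forall z, 0 <= z -> `|z - x| < d -> `|c r z - c r x| < e) ->
  (forall r a b, 0 <= a -> a <= b -> (b - a) * c r a <= P r b - P r a <= (b - a) * c r b) ->
  Kf S mu f -> (forall g, Kf S mu g -> Phi S P f <= Phi S P g) ->
  wardrop_eq c S mu f.
Proof.
move=> sg vs cont PB [box sums] fmin.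
have ff : feasible_flow S mu f.
  by move=> h; split => // s _; case/andP: (box h s).
split => // h.
have /set0Pn [s0 s0S] := vs h.
pose cost := strat_cost c S f.
case: (arg_minP cost s0S) => s1 s1S s1min.
have {}s1S : s1 \in S h by [].
exists (cost s1) => s sS; split; last by move=> _; apply: s1min.
move=> fpos; apply/eqP; rewrite eq_le s1min // andbT.
rewrite leNgt; apply/negP => lt1.
have [r sr] := single_of sg sS.
have [r' sr'] := single_of sg s1S.
have sne : s != s1 by apply/eqP => ss1; move: lt1; rewrite ss1 ltxx.
have rne : r != r' by apply/eqP => rr; move: sne; rewrite sr sr' rr eqxx.
move: lt1; rewrite /cost sr sr' !cost_single => lt1.
set l := load S f r in lt1; set l' := load S f r' in lt1.
pose e := (c r l - c r' l') / 2.
have e0 : 0 < e by rewrite divr_gt0 // subr_gt0.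
have lf0 := load_ge0 ff.
have [d1 d10 hd1] := cont r' l' (lf0 r') e e0.
have [d2 d20 hd2] := cont r l (lf0 r) e e0.
pose a := f h s.
pose dl := Num.min (Num.min d1 d2) a / 2.
have m0 : 0 < Num.min (Num.min d1 d2) a by rewrite !lt_min d10 d20 fpos.
have dl0 : 0 < dl by rewrite divr_gt0.
have dlm : dl < Num.min (Num.min d1 d2) a by rewrite /dl ltr_pdivrMr // ltr_pMr // ltr1n.
have dl1 : dl < d1 by apply: (lt_le_trans dlm); rewrite !ge_min lexx.
have dl2 : dl < d2 by apply: (lt_le_trans dlm); rewrite !ge_min lexx orbT.
have dla : 2 * dl <= a.
  by rewrite /dl mulrC divfK ?pnatr_eq0 // !ge_min lexx !orbT.
pose g := fun h2 t => f h2 t + dl * (ind (h, s1) h2 t - ind (h, s) h2 t).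
have pne : (h, s1) != (h, s) by rewrite xpair_eqE eqxx /= eq_sym.
have mu0 : forall h2, 0 <= mu h2.
  move=> h2; rewrite -sums; apply: sumr_ge0 => t _; by case/andP: (box h2 t).
have muB : mu h <= \sum_h2 mu h2.
  by rewrite (bigD1 h) //= lerDl sumr_ge0.
have two : f h s + f h s1 <= mu h.
  rewrite -sums (bigD1 s) //= (bigD1 s1) /=; last by rewrite s1S eq_sym.
  rewrite addrA lerDl sumr_ge0 // => t _; by case/andP: (box h t).
have gK : Kf S mu g.
  split.
    move=> h2 t; rewrite /g /ind.
    have [e1|n1] := eqVneq (h2, t) (h, s1).
      case: e1 => -> ->; rewrite (negbTE pne) /= subr0 mulr1.
      have [f0 _] := andP (box h s); have [f1 _] := andP (box h s1).
      apply/andP; split; first lra.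
      apply: (le_trans _ muB); rewrite /a in dla; lra.
    have [e2|n2] := eqVneq (h2, t) (h, s).
      case: e2 => -> ->; rewrite /= sub0r mulrN1.
      have [f0 f1] := andP (box h s); apply/andP; split; first by rewrite /a in dla; lra.
      by apply: (le_trans _ f1); rewrite gerDl oppr_le0 ltW.
    by rewrite subrr mulr0 addr0 box.
  move=> h2; rewrite /g big_split /= -mulr_sumr sumrB !sum_ind // sums.
  by rewrite subrr mulr0 addr0.
have := fmin g gK; apply/negP; rewrite -ltNge.
rewrite /Phi -subr_lt0 -sumrB.
have lg : forall x, load S g x = load S f x + dl * ((x \in [set r']%SET)%:R - (x \in [set r]%SET)%:R).
  by move=> x; rewrite /g load_lin !load_ind // -?sr -?sr'.
rewrite (bigD1 r) //= (bigD1 r') /=; last by rewrite eq_sym.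
rewrite big1 ?addr0; last first.
  move=> x /andP[xr xr']; rewrite lg !inE (negbTE xr) (negbTE xr') subrr mulr0 addr0.
  by rewrite subrr.
rewrite !lg !inE eqxx (negbTE rne) eq_sym (negbTE rne) /= -/l -/l'.
rewrite eqxx sub0r mulrN1 subr0 mulr1.
have la : a <= l.
  rewrite /l /load (bigD1 h) //= (bigD1 s) /=; last by rewrite sS /= sr inE.
  rewrite -addrA lerDl addr_ge0 //.
    by apply: sumr_ge0 => t _; case/andP: (box h t).
  by apply: sumr_ge0 => h2 _; apply: sumr_ge0 => t _; case/andP: (box h2 t).
have lpos : 0 <= l - dl by lra.
have ll1 : l' <= l' + dl by lra.
have /andP[_ B1] := PB r' l' (l' + dl) (lf0 r') ll1.
have ll2 : l - dl <= l by lra.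
have /andP[B2 _] := PB r (l - dl) l lpos ll2.
have C1 : c r' (l' + dl) < c r' l' + e.
  have := hd1 (l' + dl) (addr_ge0 (lf0 r') (ltW dl0)).
  rewrite addrAC subrr add0r gtr0_norm // => /(_ dl1).
  by rewrite ltr_norml => /andP[_]; lra.
have C2 : c r l - e < c r (l - dl).
  have := hd2 (l - dl) lpos.
  rewrite addrAC subrr add0r normrN gtr0_norm // => /(_ dl2).
  by rewrite ltr_norml => /andP[+ _]; lra.
have ee : c r' l' + e = c r l - e by rewrite /e; field.
have E1 : l' + dl - l' = dl by ring.
have E2 : l - (l - dl) = dl by ring.
rewrite E1 in B1; rewrite E2 in B2.
have M : dl * (c r' (l' + dl) - c r (l - dl)) < 0.
  by rewrite pmulr_rlt0 // subr_lt0; lra.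
lra.
Qed.
End Mon.

Section Top.
Variables (R : realType) (Res H : finType).
Local Notation T := (prod H {set Res}).
Local Notation V := 'rV[R]_#|{: T}|.

Definition fl (v : V) : H -> {set Res} -> R := fun h s => v ord0 (enum_rank (h, s)).
Definition vec_of (g : H -> {set Res} -> R) : V :=
  \row_(i < #|{: T}|) g (enum_val i).1 (enum_val i).2.

Lemma fl_vec g h s : fl (vec_of g) h s = g h s.
Proof. by rewrite /fl /vec_of mxE enum_rankK. Qed.

Lemma fl_cont h s : continuous (fun v : V => fl v h s).
Proof. exact: coord_continuous. Qed.

Lemma load_cont S r : continuous (fun v : V => load S (fl v) r).
Proof.
apply: continuous_big; first exact: add_continuous.
move=> h _; apply: continuous_big; first exact: add_continuous.
by move=> s _; exact: fl_cont.
Qed.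

Lemma Phi_cont S (P : Res -> R -> R) : (forall r, continuous (P r)) ->
  continuous (fun v : V => Phi S P (fl v)).
Proof.
move=> Pc; apply: continuous_big; first exact: add_continuous.
move=> r _ v; apply: continuous_comp; first exact: load_cont.
exact: Pc.
Qed.

Lemma sq_cont : continuous (fun x : R => x ^+ 2).
Proof.
have -> : (fun x : R => x ^+ 2) = (fun x => x * x) by apply/funext => y; rewrite expr2.
by move=> x; apply: (@continuousM _ _ id id).
Qed.

Lemma fst_cont (X Y : topologicalType) : continuous (@fst X Y).
Proof. by move=> [x y]; exact: cvg_fst. Qed.
Lemma snd_cont (X Y : topologicalType) : continuous (@snd X Y).
Proof. by move=> [x y]; exact: cvg_snd. Qed.

Lemma closed_le_fun (X : topologicalType) (phi : X -> R) a :
  continuous phi -> closed [set x | phi x <= a].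
Proof.
move=> pc; apply: (@preimage_closed X R phi [set y | y <= a]).
  by move=> x _; exact: pc.
exact: closed_le.
Qed.

Lemma closed_ge_fun (X : topologicalType) (phi : X -> R) a :
  continuous phi -> closed [set x | a <= phi x].
Proof.
move=> pc; apply: (@preimage_closed X R phi [set y | a <= y]).
  by move=> x _; exact: pc.
exact: closed_ge.
Qed.

Lemma closed_eq_fun (X : topologicalType) (phi : X -> R) a :
  continuous phi -> closed [set x | phi x = a].
Proof.
move=> pc; apply: (@preimage_closed X R phi [set y | y = a]).
  by move=> x _; exact: pc.
exact: closed_eq.
Qed.

Lemma cluster_closed (X : topologicalType) (F : set_system X) (A : set X) p :
  cluster F p -> F A -> closed A -> A p.
Proof. by rewrite clusterE => hp FA cA; apply: cA; exact: hp. Qed.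

Definition KV S (mu : H -> R) : set V := [set v | Kf S mu (fl v)].

Lemma KV_compact S mu : compact (KV S mu).
Proof.
pose B := \sum_h mu h.
have -> : KV S mu = (\bigcap_(p in [set: T]) [set v : V | 0 <= fl v p.1 p.2])
   `&` (\bigcap_(p in [set: T]) [set v : V | fl v p.1 p.2 <= B])
   `&` (\bigcap_(h in [set: H]) [set v : V | \sum_(s in S h) fl v h s = mu h]).
  apply/seteqP; split.
    move=> v [box sums]; split; [split|] => [p _|p _|h _] /=.
    - by case/andP: (box p.1 p.2).
    - by case/andP: (box p.1 p.2).
    - exact: sums.
  move=> v [[b1 b2] b3]; split.
    by move=> h s; rewrite (b1 (h, s) I) (b2 (h, s) I).
  by move=> h; exact: (b3 h I).
have boxc : compact [set v : V | forall i, `[0, B] (v ord0 i)].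
  by apply: (@rV_compact _ _ (fun _ => `[0, B])) => i; exact: segment_compact.
apply: (subclosed_compact _ boxc).
- apply: closedI; first apply: closedI.
  + by apply: closed_bigI => p _; apply: closed_ge_fun; exact: fl_cont.
  + by apply: closed_bigI => p _; apply: closed_le_fun; exact: fl_cont.
  + apply: closed_bigI => h _; apply: closed_eq_fun.
    apply: continuous_big; first exact: add_continuous.
    by move=> s _; exact: fl_cont.
- move=> v [[b1 b2] _] i /=; rewrite in_itv /=.
  have := b1 (enum_val i) I; have := b2 (enum_val i) I.
  by rewrite /fl -surjective_pairing enum_valK => -> ->.
Qed.
End Top.

Lemma within_ed (R : realType) (f : R -> R) :
  {within [set x : R | 0 <= x], continuous f} ->
  forall x, 0 <= x -> forall e, 0 < e ->
  exists2 d, 0 < d & forall z, 0 <= z -> `|z - x| < d -> `|f z - f x| < e.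
Proof.
move=> /subspace_continuousP hc x x0 e e0.
have := hc x x0; move/cvgrPdist_lt/(_ e e0).
rewrite /within /= => /nbhs_ballP [d d0 hd].
exists d => // z z0 zx; rewrite distrC; apply: hd => //.
by rewrite /ball /= distrC.
Qed.

Section Main.
Variables (R : realType) (Res H : finType).
Local Notation T := (prod H {set Res}).
Local Notation V := 'rV[R]_#|{: T}|.
Variable S : H -> {set {set Res}}.
Hypothesis sg : singleton_game S.
Hypothesis vs : valid_strategies S.

Definition Nrm (f : H -> {set Res} -> R) := \sum_r (load S f r) ^+ 2.

Lemma Nrm_cont : continuous (fun v : V => Nrm (fl v)).
Proof.
apply: continuous_big; first exact: add_continuous.
move=> r _ v; apply: (@continuous_comp _ _ _ (fun v : V => load S (fl v) r) (fun x => x ^+ 2)).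
  exact: load_cont.
exact: sq_cont.
Qed.

Lemma fl_vecE g : fl (vec_of g : V) = g.
Proof. by apply/funext => h; apply/funext => s; exact: fl_vec. Qed.

Lemma min_exists (A : set V) (phi : V -> R) :
  A !=set0 -> compact A -> continuous phi ->
  exists2 w, A w & forall v, A v -> phi w <= phi v.
Proof.
move=> A0 cA pc.
have [w wA wm] := compact_EVT_min A0 cA (@continuous_subspaceT _ _ A phi pc).
by exists w; [rewrite -in_setE|move=> v vA; apply: wm; rewrite in_setE].
Qed.

Lemma KV_nonempty (mu : H -> R) : nonneg_demand mu -> KV S mu !=set0.
Proof.
move=> mu0.
have /choice [s0 hs0] : forall h, exists s, s \in S h.
  by move=> h; have /set0Pn [s sS] := vs h; exists s.
pose g h s := if s == s0 h then mu h else 0.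
exists (vec_of g); rewrite /KV /= fl_vecE; split.
  move=> h s; rewrite /g; case: eqP => _.
    by rewrite mu0 /= (bigD1 h) //= lerDl sumr_ge0.
  by rewrite lexx sumr_ge0.
move=> h; rewrite (bigD1 (s0 h)) //= /g eqxx big1 ?addr0 //.
by move=> s /andP[_ /negbTE ->].
Qed.

Definition spec (P : Res -> R -> R) (mu : H -> R) (w : V) :=
  [/\ KV S mu w, (forall v, KV S mu v -> Phi S P (fl w) <= Phi S P (fl v))
    & (forall v, KV S mu v -> Phi S P (fl v) <= Phi S P (fl w) -> Nrm (fl w) <= Nrm (fl v))].

Lemma spec_exists (P : Res -> R -> R) (mu : H -> R) :
  (forall r, continuous (P r)) -> nonneg_demand mu -> exists w, spec P mu w.
Proof.
move=> Pc mu0.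
have [w0 w0K w0m] := min_exists (KV_nonempty mu0) (@KV_compact R Res H S mu) (@Phi_cont R Res H S P Pc).
pose E := KV S mu `&` [set v : V | Phi S P (fl v) <= Phi S P (fl w0)].
have cE : compact E.
  apply: compact_closedI; first exact: KV_compact.
  by apply: closed_le_fun; exact: Phi_cont.
have E0 : E !=set0 by exists w0; split => //=; exact: lexx.
have [w [wK wle] wm] := min_exists E0 cE Nrm_cont.
exists w; split => //.
  by move=> v vK; apply: (le_trans wle); exact: w0m.
by move=> v vK vle; apply: wm; split => //; apply: le_trans vle wle.
Qed.

Lemma load_mid (f g : H -> {set Res} -> R) r :
  load S (fun h s => (f h s + g h s) / 2) r = (load S f r + load S g r) / 2.
Proof.
rewrite /load -big_split /= mulr_suml; apply: eq_bigr => h _.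
by rewrite -big_split /= mulr_suml.
Qed.

Lemma uniq_sel (c P : Res -> R -> R) (mu : H -> R) (w u : V) :
  (forall r a b, 0 <= a -> a <= b -> (b - a) * c r a <= P r b - P r a <= (b - a) * c r b) ->
  spec P mu w -> KV S mu u -> Phi S P (fl u) <= Phi S P (fl w) ->
  Nrm (fl u) <= Nrm (fl w) -> forall r, load S (fl u) r = load S (fl w) r.
Proof.
move=> PB [wK wmin wN] uK uP uN.
move=> r0; apply/eqP/negP => ne.
have [bu su] := uK; have [bw sw] := wK.
pose z : V := vec_of (fun h s => (fl u h s + fl w h s) / 2).
have zK : KV S mu z.
  rewrite /KV /= fl_vecE; split.
    move=> h s; have /andP[a1 a2] := bu h s; have /andP[b1 b2] := bw h s.
    by apply/andP; split; lra.
  by move=> h; rewrite -mulr_suml big_split /= su sw; lra.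
have ffu : feasible_flow S mu (fl u) by move=> hh; split => // s _; case/andP: (bu hh s).
have ffw : feasible_flow S mu (fl w) by move=> hh; split => // s _; case/andP: (bw hh s).
have lu0 := load_ge0 ffu; have lw0 := load_ge0 ffw.
have conv : forall r a b, 0 <= a -> 0 <= b -> P r ((a + b) / 2) <= (P r a + P r b) / 2.
  move=> r a b a0 b0.
  wlog ab : a b a0 b0 / a <= b.
    move=> W; have [|ba] := leP a b; first exact: W.
    by rewrite addrC [X in _ <= X / 2]addrC; apply: W => //; apply: ltW.
  have m0 : 0 <= (a + b) / 2 by lra.
  have /andP[_ h1] := PB r a ((a + b) / 2) a0 ltac:(lra).
  have /andP[h2 _] := PB r ((a + b) / 2) b m0 ltac:(lra).
  have e1 : (a + b) / 2 - a = b - (a + b) / 2 by field.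
  rewrite e1 in h1; lra.
have zP : Phi S P (fl z) <= Phi S P (fl w).
  apply: (@le_trans _ _ ((Phi S P (fl u) + Phi S P (fl w)) / 2)); last by lra.
  rewrite /z fl_vecE.
  rewrite /Phi -big_split mulr_suml; apply: ler_sum => r _.
  by rewrite load_mid; apply: conv.
have := wN z zK zP; apply/negP; rewrite -ltNge.
apply: (@lt_le_trans _ _ ((Nrm (fl u) + Nrm (fl w)) / 2)); last by lra.
rewrite /z fl_vecE.
rewrite /Nrm -big_split mulr_suml.
rewrite (bigD1 r0) //= [X in _ < X](bigD1 r0) //=.
apply: ltr_leD.
  rewrite load_mid.
  set a := load S (fl u) r0; set b := load S (fl w) r0.
  have : 0 < (a - b) ^+ 2 by rewrite exprn_even_gt0 // subr_eq0; apply/negP.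
  by move=> hp; nra.
apply: ler_sum => r _; rewrite load_mid.
set a := load S (fl u) r; set b := load S (fl w) r.
have := sqr_ge0 (a - b); nra.
Qed.

Definition PE (P : Res -> R -> R) (e : R) r x := P r x + e / 2 * x ^+ 2.
Definition cE (c : Res -> R -> R) (e : R) r x := c r x + e * x.

Lemma Phi_PE P e f : Phi S (PE P e) f = Phi S P f + e / 2 * Nrm f.
Proof. by rewrite /Phi /Nrm /PE big_split /= mulr_sumr. Qed.

Lemma Nrm_ge0 f : 0 <= Nrm f.
Proof. by apply: sumr_ge0 => r _; exact: sqr_ge0. Qed.

Lemma sqc_cont (k : R) : continuous (fun x : R => k * x ^+ 2).
Proof.
move=> x; apply: (@continuous_comp _ _ _ (fun x : R => x ^+ 2) ( *%R k)).
  exact: sq_cont.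
exact: mulrl_continuous.
Qed.

Lemma PE_cont P e : (forall r, continuous (P r)) -> forall r, continuous (PE P e r).
Proof.
move=> Pc r.
have -> : PE P e r = P r + (fun x => e / 2 * x ^+ 2) by apply/funext.
move=> x; apply: continuousD; first exact: Pc.
exact: sqc_cont.
Qed.

Lemma PB_E (c P : Res -> R -> R) e :
  (forall r a b, 0 <= a -> a <= b -> (b - a) * c r a <= P r b - P r a <= (b - a) * c r b) ->
  0 <= e ->
  (forall r a b, 0 <= a -> a <= b ->
     (b - a) * cE c e r a <= PE P e r b - PE P e r a <= (b - a) * cE c e r b).
Proof.
move=> PB e0 r a b a0 ab; have /andP[h1 h2] := PB r a b a0 ab.
have h3 := mulr_ge0 e0 (sqr_ge0 (b - a)).
rewrite /cE /PE; apply/andP; split; nra.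
Qed.

Lemma cont_E (c : Res -> R -> R) e :
  (forall r x, 0 <= x -> forall eps, 0 < eps ->
     exists2 d, 0 < d & forall z, 0 <= z -> `|z - x| < d -> `|c r z - c r x| < eps) ->
  0 <= e ->
  (forall r x, 0 <= x -> forall eps, 0 < eps ->
     exists2 d, 0 < d & forall z, 0 <= z -> `|z - x| < d -> `|cE c e r z - cE c e r x| < eps).
Proof.
move=> cont e0 r x x0 eps eps0.
have eps2 : 0 < eps / 2 by rewrite divr_gt0.
have [d1 d10 hd1] := cont r x x0 _ eps2.
pose d := Num.min d1 (eps / 2 / (e + 1)).
have e1 : 0 < e + 1 by lra.
have d0 : 0 < d by rewrite lt_min d10 divr_gt0.
exists d => // z z0 zx.
have zd1 : `|z - x| < d1 by apply: (lt_le_trans zx); rewrite ge_min lexx.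
have zd2 : `|z - x| < eps / 2 / (e + 1) by apply: (lt_le_trans zx); rewrite ge_min lexx orbT.
have E : cE c e r z - cE c e r x = (c r z - c r x) + e * (z - x) by rewrite /cE; ring.
rewrite E; apply: (le_lt_trans (ler_normD _ _)).
rewrite normrM (ger0_norm e0).
have h1 := hd1 z z0 zd1.
have h2 : e * `|z - x| <= eps / 2.
  have : `|z - x| * (e + 1) < eps / 2 by rewrite -ltr_pdivlMr.
  have := normr_ge0 (z - x); nra.
lra.
Qed.

Lemma pert_bounds P (m : H -> R) (w v : V) e :
  spec P m w -> KV S m v ->
  (forall v', KV S m v' -> Phi S (PE P e) (fl v) <= Phi S (PE P e) (fl v')) -> 0 < e ->
  Nrm (fl v) <= Nrm (fl w) /\ Phi S P (fl v) <= Phi S P (fl w) + e / 2 * Nrm (fl w).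
Proof.
move=> [wK wmin _] vK vmin e0.
have := vmin w wK; rewrite !Phi_PE => h1.
have h2 := wmin v vK.
have nv := Nrm_ge0 (fl v); have nw := Nrm_ge0 (fl w).
have e2 : 0 < e / 2 by rewrite divr_gt0.
split; last by nra.
have : e / 2 * Nrm (fl v) <= e / 2 * Nrm (fl w) by lra.
by rewrite ler_pM2l.
Qed.

Lemma KV_Kf (m : H -> R) (v : V) : KV S m v -> Kf S m (fl v).
Proof. by []. Qed.

Lemma pert_wardrop (c P : Res -> R -> R) (m : H -> R) (v : V) e :
  (forall r x, 0 <= x -> forall eps, 0 < eps ->
     exists2 d, 0 < d & forall z, 0 <= z -> `|z - x| < d -> `|c r z - c r x| < eps) ->
  (forall r a b, 0 <= a -> a <= b -> (b - a) * c r a <= P r b - P r a <= (b - a) * c r b) ->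
  0 <= e -> KV S m v ->
  (forall v', KV S m v' -> Phi S (PE P e) (fl v) <= Phi S (PE P e) (fl v')) ->
  wardrop_eq (cE c e) S m (fl v).
Proof.
move=> cont PB e0 vK vmin.
apply: (fo sg vs (cont_E cont e0) (PB_E PB e0) vK).
move=> g gK; have := vmin (vec_of g); rewrite fl_vecE; apply.
by rewrite /KV /= fl_vecE.
Qed.

Lemma mono_sel (c P : Res -> R -> R) (mu mu' : H -> R) (w w' : V) :
  (forall r x, 0 <= x -> forall eps, 0 < eps ->
     exists2 d, 0 < d & forall z, 0 <= z -> `|z - x| < d -> `|c r z - c r x| < eps) ->
  (forall r a b, 0 <= a -> a <= b -> c r a <= c r b) ->
  (forall r a b, 0 <= a -> a <= b -> (b - a) * c r a <= P r b - P r a <= (b - a) * c r b) ->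
  (forall r, continuous (P r)) ->
  nonneg_demand mu -> nonneg_demand mu' -> (forall h, mu h <= mu' h) ->
  spec P mu w -> spec P mu' w' -> forall r, load S (fl w) r <= load S (fl w') r.
Proof.
move=> cont cm PB Pc m0 m0' mm sw sw'.
have pert : forall (m : H -> R) e, nonneg_demand m -> 0 < e -> exists v : V,
    KV S m v /\ (forall v', KV S m v' -> Phi S (PE P e) (fl v) <= Phi S (PE P e) (fl v')).
  move=> m e m0e e0.
  have [v vK vm] := min_exists (KV_nonempty m0e) (@KV_compact R Res H S m)
    (@Phi_cont R Res H S (PE P e) (PE_cont (P:=P) (e:=e) Pc)).
  by exists v.
have /choice [vsel Hv] : forall e : R, exists p : V * V, 0 < e ->
   [/\ KV S mu p.1, KV S mu' p.2,
       (forall v', KV S mu v' -> Phi S (PE P e) (fl p.1) <= Phi S (PE P e) (fl v'))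
     & (forall v', KV S mu' v' -> Phi S (PE P e) (fl p.2) <= Phi S (PE P e) (fl v'))].
  move=> e; have [e0|e0] := ltP 0 e.
    have [v [vK vm]] := pert mu e m0 e0; have [v' [vK' vm']] := pert mu' e m0' e0.
    by exists (v, v').
  by exists (0, 0).
pose F := (vsel @ 0^'+).
have ev : forall (A : set (V * V)) b, 0 < b ->
    (forall e, 0 < e -> e < b -> A (vsel e)) -> F A.
  move=> A b b0 hA; rewrite /F /=.
  by apply: (filterS2 _ _ (nbhs_right_gt 0) (nbhs_right_lt b0)) => e e0 eb; exact: hA.
have K2c : compact (KV S mu `*` KV S mu').
  by apply: compact_setX; exact: KV_compact.
have FK : F (KV S mu `*` KV S mu').
  by apply: (ev _ 1) => // e e0 _; case: (Hv e e0).
have [p [pK pcl]] := K2c F (fmap_proper_filter _ _) FK.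
have Ecl : forall A : set (V * V), F A -> closed A -> A p.
  by move=> A FA cA; exact: (cluster_closed pcl FA cA).
have strict : forall e, 0 < e -> forall r a b, 0 <= a -> a < b -> cE c e r a < cE c e r b.
  move=> e e0 r a b a0 ab; rewrite /cE; apply: ler_ltD; first exact/cm/ltW.
  by rewrite ltr_pM2l.
have L : forall r, load S (fl p.1) r <= load S (fl p.2) r.
  move=> r; rewrite -subr_le0.
  apply: (Ecl [set q : V * V | load S (fl q.1) r - load S (fl q.2) r <= 0]).
  - apply: (ev _ 1) => // e e0 _; case: (Hv e e0) => vK vK' vm vm' /=.
    rewrite subr_le0; apply: (mon_loads sg (strict e e0)) mm r.
      exact: (pert_wardrop cont PB (ltW e0) vK vm).
    exact: (pert_wardrop cont PB (ltW e0) vK' vm').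
  - apply: closed_le_fun => q.
    apply: continuousB.
      by apply: (@continuous_comp _ _ _ fst (fun v : V => load S (fl v) r));
        [exact: fst_cont|exact: load_cont].
    by apply: (@continuous_comp _ _ _ snd (fun v : V => load S (fl v) r));
      [exact: snd_cont|exact: load_cont].
have U1 : forall (sel : V * V -> V) (m : H -> R) (ww : V),
    continuous sel -> spec P m ww -> KV S m (sel p) ->
    (forall e, 0 < e -> KV S m (sel (vsel e)) /\
       (forall v', KV S m v' -> Phi S (PE P e) (fl (sel (vsel e))) <= Phi S (PE P e) (fl v'))) ->
    forall r, load S (fl (sel p)) r = load S (fl ww) r.
  move=> sel m ww selc sww selK hsel.
  have phc : continuous (fun q : V * V => Phi S P (fl (sel q))).
    by move=> q; apply: (@continuous_comp _ _ _ sel (fun v : V => Phi S P (fl v)));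
      [exact: selc|exact: Phi_cont].
  have nc : continuous (fun q : V * V => Nrm (fl (sel q))).
    by move=> q; apply: (@continuous_comp _ _ _ sel (fun v : V => Nrm (fl v)));
      [exact: selc|exact: Nrm_cont].
  apply: (uniq_sel PB sww selK).
    apply/ler_addgt0Pr => d d0.
    apply: (Ecl [set q : V * V | Phi S P (fl (sel q)) <= Phi S P (fl ww) + d]);
      last exact: closed_le_fun.
    have nw := Nrm_ge0 (fl ww).
    have b0 : 0 < d / (Nrm (fl ww) + 1) by rewrite divr_gt0 // ltr_pwDr.
    apply: (ev _ _ b0) => e e0 eb /=.
    have [vK vm] := hsel e e0.
    have [_ hb] := pert_bounds sww vK vm e0.
    apply: (le_trans hb); rewrite lerD2l.
    have : e * (Nrm (fl ww) + 1) < d by rewrite -ltr_pdivlMr // ltr_pwDr.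
    nra.
  apply: (Ecl [set q : V * V | Nrm (fl (sel q)) <= Nrm (fl ww)]);
    last exact: closed_le_fun.
  apply: (ev _ 1) => // e e0 _ /=.
  have [vK vm] := hsel e e0.
  by have [hb _] := pert_bounds sww vK vm e0.
move=> r.
rewrite -(U1 fst mu w (@fst_cont _ _) sw pK.1) ?(L r) //.
  rewrite -(U1 snd mu' w' (@snd_cont _ _) sw' pK.2) ?(L r) //.
  by move=> e e0; case: (Hv e e0).
by move=> e e0; case: (Hv e e0).
Qed.
End Main.

Theorem theorem3p1 (R : realType) (Res H : finType)
    (c : Res -> R -> R) (S : H -> {set {set Res}}) :
  valid_costs c -> valid_strategies S -> singleton_game S ->
  exists x : (H -> R) -> Res -> R, monotone_eq_selection c S x.
Proof.
move=> vc vs sg.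
have /choice [P HP] : forall r, exists P : R -> R,
    (forall a b, 0 <= a -> a <= b -> (b - a) * c r a <= P b - P a <= (b - a) * c r b)
    /\ continuous P.
  by move=> r; case: (vc r) => c1 c2 c3; exact: prim_exists.
have PB : forall r a b, 0 <= a -> a <= b -> (b - a) * c r a <= P r b - P r a <= (b - a) * c r b.
  by move=> r; case: (HP r).
have Pc : forall r, continuous (P r) by move=> r; case: (HP r).
have cont : forall r x, 0 <= x -> forall eps, 0 < eps ->
     exists2 d, 0 < d & forall z, 0 <= z -> `|z - x| < d -> `|c r z - c r x| < eps.
  by move=> r; case: (vc r) => c1 _ _; exact: within_ed.
have cm : forall r a b, 0 <= a -> a <= b -> c r a <= c r b.
  by move=> r; case: (vc r).
have /choice [W HW] : forall mu : H -> R, exists w : 'rV[R]_#|{: H * {set Res}}|,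
    nonneg_demand mu -> @spec R Res H S P mu w.
  move=> mu; case: (pselect (nonneg_demand mu)) => m0.
    have [w hw] := @spec_exists R Res H S vs P mu Pc m0.
    by exists w.
  by exists (0 : 'rV[R]_#|{: H * {set Res}}|).
exists (fun mu r => load S (fl (W mu)) r); split.
  move=> mu m0; have [wK wmin wN] := HW mu m0.
  exists (fl (W mu)); split => //.
  apply: (@fo R Res H c P S mu (fl (W mu)) sg vs cont PB wK) => g gK.
  have := wmin (vec_of g); rewrite fl_vecE; apply.
  by rewrite /KV /= fl_vecE.
move=> r h mu mu' m0 m0' heq hle.
apply: (@mono_sel R Res H S sg vs c P mu mu' (W mu) (W mu') cont cm PB Pc m0 m0' _ (HW mu m0) (HW mu' m0') r).
move=> h'; have [->|ne] := eqVneq h' h; first exact: hle.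
by rewrite heq.
Qed.
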